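(* There is no monoid over $\mathbb{C}^2$ — i.e. no set $M\subseteq\mathbb{C}^2$ of pairwise distinct vectors with an associative linear map $\mu:\mathbb{C}^2\otimes\mathbb{C}^2\to\mathbb{C}^2$ and a unit $e\in M$ — such that the multiplication $(a,b)\mapsto\mu(a\otimes b)$ on $M$ is isomorphic to the multiplication of the group $\hat Q$ of unit quaternions.
   Context: A monoid over $\mathbb{C}^2$ is a set $M\subseteq\mathbb{C}^2$ of pairwise distinct vectors, a linear map $\mu:\mathbb{C}^2\otimes\mathbb{C}^2\to\mathbb{C}^2$ with $\mu\circ(\mu\otimes\mathrm{id}) = \mu\circ(\mathrm{id}\otimes\mu)$, and $e\in M$ with $\mu(e\otimes m)=m=\mu(m\otimes e)$ for all $m\in M$. $\hat Q$ is the (non-commutative) group of quaternions $q_w+iq_x+jq_y+kq_z$ of unit length under quaternion multiplication ($i^2=j^2=k^2=ijk=-1$). *)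

(* Defs.v *)
From HB Require Import structures.
From mathcomp Require Import all_boot all_algebra complex reals.
Set Implicit Arguments. Unset Strict Implicit. Unset Printing Implicit Defensive.
Import GRing.Theory Num.Theory.
Local Open Scope ring_scope.

Definition C2 (R : realType) := 'rV[R[i]]_2.

(* A linear map mu : C^2 (x) C^2 -> C^2 is determined by its structure
   constants on the basis e_i (x) e_j:  mu(e_i (x) e_j) = sum_k c i j k e_k.
   mu_app c a b = mu(a (x) b). *)
Definition mu_app (R : realType) (c : 'I_2 -> 'I_2 -> 'I_2 -> R[i])
  (a b : C2 R) : C2 R :=
  \row_(k < 2) \sum_(i < 2) \sum_(j < 2) c i j k * a ord0 i * b ord0 j.

(* associativity mu o (mu (x) id) = mu o (id (x) mu); by linearity it is
   equivalent to checking it on pure tensors a (x) b (x) c, for all a b c. *)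
Definition mu_assoc (R : realType) (c : 'I_2 -> 'I_2 -> 'I_2 -> R[i]) : Prop :=
  forall a b d : C2 R, mu_app c (mu_app c a b) d = mu_app c a (mu_app c b d).

Definition monoid_over_C2 (R : realType) (M : C2 R -> Prop)
  (c : 'I_2 -> 'I_2 -> 'I_2 -> R[i]) (e : C2 R) : Prop :=
  mu_assoc c /\ M e /\ (forall m, M m -> mu_app c e m = m /\ mu_app c m e = m).

Record quat (R : realType) := Quat { qw : R; qx : R; qy : R; qz : R }.

Definition qmul (R : realType) (p q : quat R) : quat R :=
  Quat (qw p * qw q - qx p * qx q - qy p * qy q - qz p * qz q)
       (qw p * qx q + qx p * qw q + qy p * qz q - qz p * qy q)
       (qw p * qy q - qx p * qz q + qy p * qw q + qz p * qx q)
       (qw p * qz q + qx p * qy q - qy p * qx q + qz p * qw q).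

Definition unitq (R : realType) (q : quat R) : Prop :=
  qw q ^+ 2 + qx q ^+ 2 + qy q ^+ 2 + qz q ^+ 2 = 1.

Definition iso_to_Qhat (R : realType) (M : C2 R -> Prop)
  (c : 'I_2 -> 'I_2 -> 'I_2 -> R[i]) : Prop :=
  exists f : quat R -> C2 R,
    (forall q, unitq q -> M (f q)) /\
    (forall p q, unitq p -> unitq q -> f p = f q -> p = q) /\
    (forall m, M m -> exists q, unitq q /\ f q = m) /\
    (forall p q, unitq p -> unitq q -> f (qmul p q) = mu_app c (f p) (f q)).

(* Main.v *)
Require Import Defs.
From mathcomp Require Import all_boot all_algebra complex reals.
From mathcomp Require Import ring lra.
Import GRing.Theory Num.Theory.
Local Open Scope ring_scope.

Notation o0 := (@Ordinal 2 0 isT).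
Notation o1 := (@Ordinal 2 1 isT).

Lemma muE (R : realType) (c : 'I_2 -> 'I_2 -> 'I_2 -> R[i]) (a b : C2 R) k :
  mu_app c a b ord0 k =
    c o0 o0 k * a ord0 o0 * b ord0 o0 + c o0 o1 k * a ord0 o0 * b ord0 o1
  + (c o1 o0 k * a ord0 o1 * b ord0 o0 + c o1 o1 k * a ord0 o1 * b ord0 o1).
Proof.
rewrite /mu_app mxE !big_ord_recl !big_ord0 !addr0.
have -> : lift ord0 ord0 = o1 :> 'I_2 by apply: val_inj.
by have -> : ord0 = o0 :> 'I_2 by apply: val_inj.
Qed.

Lemma key (R : realType) (c : 'I_2 -> 'I_2 -> 'I_2 -> R[i]) (E I J : C2 R) :
  mu_app c I E = I -> mu_app c E I = I -> mu_app c E J = J -> mu_app c J E = J ->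
  E != 0 -> mu_app c I J = mu_app c J I.
Proof.
move=> HIE HEI HEJ HJE E0.
have cmp : forall (u v : C2 R), (forall k, u ord0 k = v ord0 k) -> u = v.
  by move=> u v H; apply/rowP => k; exact: H.
apply: cmp => k.
have hIE := congr1 (fun v : C2 R => v ord0 k) HIE.
have hEI := congr1 (fun v : C2 R => v ord0 k) HEI.
have hEJ := congr1 (fun v : C2 R => v ord0 k) HEJ.
have hJE := congr1 (fun v : C2 R => v ord0 k) HJE.
move: hIE hEI hEJ hJE; rewrite /= !muE => hIE hEI hEJ hJE.
apply/eqP; rewrite -subr_eq0.
set det := E ord0 o0 * I ord0 o1 - I ord0 o0 * E ord0 o1.
have [dz|dnz] := eqVneq det 0.
- have : E ord0 o0 != 0 \/ E ord0 o1 != 0.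
    case: (eqVneq (E ord0 o0) 0) => h0; last by left.
    case: (eqVneq (E ord0 o1) 0) => h1; last by right.
    exfalso; move/negP: E0; apply; apply/eqP/rowP => j.
    rewrite mxE; case: j => [[|[|//]] p].
      by rewrite (_ : Ordinal p = o0) //; apply: val_inj.
    by rewrite (_ : Ordinal p = o1) //; apply: val_inj.
  case=> h.
  + have id1 : E ord0 o0 * ((c o0 o0 k * I ord0 o0 * J ord0 o0 + c o0 o1 k * I ord0 o0 * J ord0 o1
  + (c o1 o0 k * I ord0 o1 * J ord0 o0 + c o1 o1 k * I ord0 o1 * J ord0 o1)) -
   (c o0 o0 k * J ord0 o0 * I ord0 o0 + c o0 o1 k * J ord0 o0 * I ord0 o1
  + (c o1 o0 k * J ord0 o1 * I ord0 o0 + c o1 o1 k * J ord0 o1 * I ord0 o1)))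
   = I ord0 o0 * ((c o0 o0 k * E ord0 o0 * J ord0 o0 + c o0 o1 k * E ord0 o0 * J ord0 o1
  + (c o1 o0 k * E ord0 o1 * J ord0 o0 + c o1 o1 k * E ord0 o1 * J ord0 o1)) -
   (c o0 o0 k * J ord0 o0 * E ord0 o0 + c o0 o1 k * J ord0 o0 * E ord0 o1
  + (c o1 o0 k * J ord0 o1 * E ord0 o0 + c o1 o1 k * J ord0 o1 * E ord0 o1)))
   + det * ((c o1 o0 k - c o0 o1 k) * J ord0 o0 + (c o1 o1 k - c o1 o1 k) * J ord0 o1).
      rewrite /det; ring.
    rewrite hEJ hJE subrr mulr0 add0r dz mul0r in id1.
    by move/eqP: id1; rewrite mulf_eq0 (negbTE h).
  + have id1 : E ord0 o1 * ((c o0 o0 k * I ord0 o0 * J ord0 o0 + c o0 o1 k * I ord0 o0 * J ord0 o1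
  + (c o1 o0 k * I ord0 o1 * J ord0 o0 + c o1 o1 k * I ord0 o1 * J ord0 o1)) -
   (c o0 o0 k * J ord0 o0 * I ord0 o0 + c o0 o1 k * J ord0 o0 * I ord0 o1
  + (c o1 o0 k * J ord0 o1 * I ord0 o0 + c o1 o1 k * J ord0 o1 * I ord0 o1)))
   = I ord0 o1 * ((c o0 o0 k * E ord0 o0 * J ord0 o0 + c o0 o1 k * E ord0 o0 * J ord0 o1
  + (c o1 o0 k * E ord0 o1 * J ord0 o0 + c o1 o1 k * E ord0 o1 * J ord0 o1)) -
   (c o0 o0 k * J ord0 o0 * E ord0 o0 + c o0 o1 k * J ord0 o0 * E ord0 o1
  + (c o1 o0 k * J ord0 o1 * E ord0 o0 + c o1 o1 k * J ord0 o1 * E ord0 o1)))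
   - det * ((c o0 o0 k - c o0 o0 k) * J ord0 o0 + (c o0 o1 k - c o1 o0 k) * J ord0 o1).
      rewrite /det; ring.
    rewrite hEJ hJE subrr mulr0 add0r dz mul0r ?subr0 ?oppr0 ?addr0 in id1.
    by move/eqP: id1; rewrite mulf_eq0 (negbTE h).
- have id1 : det * ((c o0 o0 k * I ord0 o0 * J ord0 o0 + c o0 o1 k * I ord0 o0 * J ord0 o1
  + (c o1 o0 k * I ord0 o1 * J ord0 o0 + c o1 o1 k * I ord0 o1 * J ord0 o1)) -
   (c o0 o0 k * J ord0 o0 * I ord0 o0 + c o0 o1 k * J ord0 o0 * I ord0 o1
  + (c o1 o0 k * J ord0 o1 * I ord0 o0 + c o1 o1 k * J ord0 o1 * I ord0 o1)))
   = (J ord0 o0 * I ord0 o1 - I ord0 o0 * J ord0 o1) *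
     ((c o0 o0 k * I ord0 o0 * E ord0 o0 + c o0 o1 k * I ord0 o0 * E ord0 o1
  + (c o1 o0 k * I ord0 o1 * E ord0 o0 + c o1 o1 k * I ord0 o1 * E ord0 o1)) -
   (c o0 o0 k * E ord0 o0 * I ord0 o0 + c o0 o1 k * E ord0 o0 * I ord0 o1
  + (c o1 o0 k * E ord0 o1 * I ord0 o0 + c o1 o1 k * E ord0 o1 * I ord0 o1))).
    rewrite /det; ring.
  rewrite hIE hEI subrr mulr0 in id1.
  by move/eqP: id1; rewrite mulf_eq0 (negbTE dnz).
Qed.

Lemma mu0l (R : realType) (c : 'I_2 -> 'I_2 -> 'I_2 -> R[i]) (x : C2 R) :
  mu_app c 0 x = 0.
Proof. by apply/rowP => k; rewrite muE !mxE; ring. Qed.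

Lemma m1n1 (R : realType) : (-1 : R) <> 1.
Proof. move=> h; lra. Qed.

Theorem corollary4p3 (R : realType) :
  ~ exists (M : C2 R -> Prop) (c : 'I_2 -> 'I_2 -> 'I_2 -> R[i]) (e : C2 R),
      monoid_over_C2 M c e /\ iso_to_Qhat M c.
Proof.
case=> M [c [e [_ [f [_ [finj [_ fmul]]]]]]].
pose q1 := Quat 1 0 0 (0 : R).
pose qm1 := Quat (-1) 0 0 (0 : R).
pose qi := Quat 0 1 0 (0 : R).
pose qj := Quat 0 0 1 (0 : R).
pose qk := Quat 0 0 0 (1 : R).
pose qmk := Quat 0 0 0 (-1 : R).
have u1 : unitq q1 by rewrite /unitq /=; ring.
have um1 : unitq qm1 by rewrite /unitq /=; ring.
have ui : unitq qi by rewrite /unitq /=; ring.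
have uj : unitq qj by rewrite /unitq /=; ring.
have uk : unitq qk by rewrite /unitq /=; ring.
have umk : unitq qmk by rewrite /unitq /=; ring.
have E1 : forall p q r, unitq p -> unitq q -> qmul p q = r -> f r = mu_app c (f p) (f q).
  by move=> p q r up uq <-; apply: fmul.
have HIE : mu_app c (f qi) (f q1) = f qi.
  by rewrite -(E1 _ _ qi ui u1) // /qmul /=; congr Quat; ring.
have HEI : mu_app c (f q1) (f qi) = f qi.
  by rewrite -(E1 _ _ qi u1 ui) // /qmul /=; congr Quat; ring.
have HJE : mu_app c (f qj) (f q1) = f qj.
  by rewrite -(E1 _ _ qj uj u1) // /qmul /=; congr Quat; ring.
have HEJ : mu_app c (f q1) (f qj) = f qj.
  by rewrite -(E1 _ _ qj u1 uj) // /qmul /=; congr Quat; ring.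
have Enz : f q1 != 0.
  apply/eqP => h.
  have : f qm1 = f q1.
    by rewrite (E1 q1 qm1 qm1 u1 um1) ?h ?mu0l // /qmul /=; congr Quat; ring.
  move/(finj _ _ um1 u1) => /(congr1 (@qw R)) /=.
  by move=> h2; exact: (@m1n1 R h2).
have Hk : f qk = mu_app c (f qi) (f qj).
  by apply: E1 => //; rewrite /qmul /=; congr Quat; ring.
have Hmk : f qmk = mu_app c (f qj) (f qi).
  by apply: E1 => //; rewrite /qmul /=; congr Quat; ring.
have := @key R c _ _ _ HIE HEI HEJ HJE Enz.
rewrite -Hk -Hmk.
move/(finj _ _ uk umk) => /(congr1 (@qz R)) /=.
by move=> h2; exact: (@m1n1 R (esym h2)).
Qed.
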